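(* Let $R$ be a commutative ring and $M$ a semisimple $R$-module that has a minimal second representation $M=\sum_{i=1}^n K_i$ whose set of main second attached primes $att^s(M)=\{Ann(K_1),\dots,Ann(K_n)\}$ satisfies $att^s(M)=Min(att^s(M))$ (i.e. these ideals are pairwise incomparable). Then the following are equivalent: (1) $M$ is a multiplication module; (2) every PS-hollow submodule of $M$ is simple; (3) every second submodule of $M$ is simple; (4) $M$ is a comultiplication module.
   Context: A submodule $N\neq 0$ of $M$ is second iff for every ideal $I\leq R$, $IN=N$ or $IN=0$. A second representation of $M$ is an expression $M=\sum_{i=1}^n K_i$ with each $K_i$ a second submodule; it is minimal if the ideals $Ann(K_i)$ are pairwise distinct and no $K_j$ is contained in $\sum_{i\neq j}K_i$. $Min(X)$ denotes the set of minimal elements of a set of ideals $X$ w.r.t. inclusion. An $R$-submodule $N\leq M$ is PS-hollow iff for every ideal $I\leq R$ and every submodule $L\leq M$: $N\subseteq IM+L$ implies $N\subseteq IM$ or $N\subseteq L$. $M$ is multiplication iff every submodule is $IM$ for some ideal $I$; $M$ is comultiplication iff $K=(0:_M(0:_R K))$ for every submodule $K\leq M$. *)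

(* Defs.v *)
From mathcomp Require Import all_boot all_order all_algebra.
Set Implicit Arguments. Unset Strict Implicit. Unset Printing Implicit Defensive.
Import GRing.Theory.
Local Open Scope ring_scope.

Section ModuleDefs.
Variables (R : comNzRingType) (M : lmodType R).

Definition ideal (I : R -> Prop) : Prop :=
  I 0 /\ (forall a b, I a -> I b -> I (a + b)) /\ (forall r a, I a -> I (r * a)).

Definition submodule (N : M -> Prop) : Prop :=
  N 0 /\ (forall x y, N x -> N y -> N (x + y)) /\ (forall (r : R) x, N x -> N (r *: x)).

Definition sub_eq (N L : M -> Prop) : Prop := forall x, N x <-> L x.
Definition sub_le (N L : M -> Prop) : Prop := forall x, N x -> L x.
Definition zero_sub : M -> Prop := fun x => x = 0.
Definition full_sub : M -> Prop := fun _ => True.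
Definition nonzero_sub (N : M -> Prop) : Prop := ~ sub_eq N zero_sub.

Definition prod_IN (I : R -> Prop) (N : M -> Prop) : M -> Prop :=
  fun x => forall L, submodule L -> (forall a n, I a -> N n -> L (a *: n)) -> L x.

Definition sum_sub (N L : M -> Prop) : M -> Prop :=
  fun x => exists n l, N n /\ L l /\ x = n + l.

Definition Ann (K : M -> Prop) : R -> Prop :=
  fun r => forall k, K k -> r *: k = 0.

Definition annM (J : R -> Prop) : M -> Prop :=
  fun m => forall r, J r -> r *: m = 0.

Definition ideal_le (I J : R -> Prop) : Prop := forall r, I r -> J r.
Definition ideal_eq (I J : R -> Prop) : Prop := forall r, I r <-> J r.

Definition second (N : M -> Prop) : Prop :=
  submodule N /\ nonzero_sub N /\
  forall I, ideal I -> sub_eq (prod_IN I N) N \/ sub_eq (prod_IN I N) zero_sub.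

Definition simple_sub (N : M -> Prop) : Prop :=
  submodule N /\ nonzero_sub N /\
  forall L, submodule L -> sub_le L N -> sub_eq L zero_sub \/ sub_eq L N.

Definition PS_hollow (N : M -> Prop) : Prop :=
  submodule N /\ nonzero_sub N /\
  forall I L, ideal I -> submodule L ->
    sub_le N (sum_sub (prod_IN I full_sub) L) ->
    sub_le N (prod_IN I full_sub) \/ sub_le N L.

Definition semisimple_mod : Prop :=
  forall N, submodule N -> exists L, submodule L /\
    sub_eq (fun x => N x /\ L x) zero_sub /\ sub_eq (sum_sub N L) full_sub.

Definition multiplication_mod : Prop :=
  forall N, submodule N -> exists I, ideal I /\ sub_eq N (prod_IN I full_sub).

Definition comultiplication_mod : Prop :=
  forall K, submodule K -> sub_eq K (annM (Ann K)).

Definition big_sum_sub (n : nat) (K : 'I_n -> M -> Prop) : M -> Prop :=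
  fun x => exists k : 'I_n -> M, (forall i, K i (k i)) /\ x = \sum_(i < n) k i.

Definition big_sum_sub_but (n : nat) (K : 'I_n -> M -> Prop) (j : 'I_n) : M -> Prop :=
  fun x => exists k : 'I_n -> M, (forall i, i != j -> K i (k i)) /\
                                 x = \sum_(i < n | i != j) k i.

Definition min_second_rep (n : nat) (K : 'I_n -> M -> Prop) : Prop :=
  sub_eq (big_sum_sub K) full_sub /\
  (forall i, second (K i)) /\
  (forall i j, i != j -> ~ ideal_eq (Ann (K i)) (Ann (K j))) /\
  (forall j, ~ sub_le (K j) (big_sum_sub_but K j)).

Definition att_eq_Min (n : nat) (K : 'I_n -> M -> Prop) : Prop :=
  forall i j, ideal_le (Ann (K j)) (Ann (K i)) -> ideal_eq (Ann (K j)) (Ann (K i)).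

End ModuleDefs.

(* Main.v *)
Require Import Defs.
From mathcomp Require Import all_boot all_order all_algebra.
From Stdlib Require Import Classical ClassicalEpsilon.
From mathcomp Require Import ring.
Set Implicit Arguments. Unset Strict Implicit. Unset Printing Implicit Defensive.
Import GRing.Theory.
Local Open Scope ring_scope.

Lemma sub_opp (R : comNzRingType) (M : lmodType R) (N : M -> Prop) x :
  submodule N -> N x -> N (- x).
Proof. by move=> [_ [_ HS]] Hx; rewrite -scaleN1r; apply: HS. Qed.

Lemma sub_sum (R : comNzRingType) (M : lmodType R) (N : M -> Prop) n
   (P : pred 'I_n) (k : 'I_n -> M) :
  submodule N -> (forall i, P i -> N (k i)) -> N (\sum_(i < n | P i) k i).
Proof.
move=> [H0 [HD _]] Hk; apply: big_ind => //.
Qed.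

Lemma sub_inter (R : comNzRingType) (M : lmodType R) (N L : M -> Prop) :
  submodule N -> submodule L -> submodule (fun x => N x /\ L x).
Proof.
move=> [N0 [ND NS]] [L0 [LD LS]]; split; first by [].
split; first by move=> x y [? ?] [? ?]; split; [apply: ND|apply: LD].
by move=> r x [? ?]; split; [apply: NS|apply: LS].
Qed.

Lemma ker_sub (R : comNzRingType) (M : lmodType R) (a : R) :
  submodule (fun y : M => a *: y = 0).
Proof.
split; first by rewrite scaler0.
split; first by move=> x y Hx Hy; rewrite scalerDr Hx Hy addr0.
by move=> r x Hx; rewrite scalerA mulrC -scalerA Hx scaler0.
Qed.

Lemma prodIN_sub (R : comNzRingType) (M : lmodType R) I (N : M -> Prop) :
  submodule (prod_IN I N).
Proof.
split; first by move=> L [? _] _.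
split; first by move=> x y Hx Hy L HL Hg; case: (HL) => _ [HD _]; apply: HD; [apply: Hx|apply: Hy].
by move=> r x Hx L HL Hg; case: (HL) => _ [_ HS]; apply: HS; apply: Hx.
Qed.

Lemma prodIN_gen (R : comNzRingType) (M : lmodType R) I (N : M -> Prop) a m :
  I a -> N m -> prod_IN I N (a *: m).
Proof. by move=> Ia Nm L _ Hg; apply: Hg. Qed.

Lemma prodIN_mono (R : comNzRingType) (M : lmodType R) (I I' : R -> Prop) (N N' : M -> Prop) :
  ideal_le I I' -> sub_le N N' -> sub_le (prod_IN I N) (prod_IN I' N').
Proof. by move=> HI HN x Hx L HL Hg; apply: Hx => // a m Ia Nm; apply: Hg; [apply: HI|apply: HN]. Qed.

Lemma Ann_ideal (R : comNzRingType) (M : lmodType R) (N : M -> Prop) : ideal (Ann N).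
Proof.
split; first by move=> k _; rewrite scale0r.
split; first by move=> a b Ha Hb k Hk; rewrite scalerDl Ha ?Hb ?addr0.
by move=> r a Ha k Hk; rewrite -scalerA Ha // scaler0.
Qed.

Definition pI (R : comNzRingType) (a : R) : R -> Prop := fun x => exists s, x = a * s.

Lemma pI_ideal (R : comNzRingType) (a : R) : ideal (pI a).
Proof.
split; first by exists 0; rewrite mulr0.
split; first by move=> x y [s ->] [t ->]; exists (s + t); rewrite mulrDr.
by move=> r x [s ->]; exists (r * s); rewrite mulrCA.
Qed.

Lemma second_cover (R : comNzRingType) (M : lmodType R) (K : M -> Prop) J r :
  second K -> ideal J -> J r -> ~ Ann K r -> sub_le K (prod_IN J K).
Proof.
move=> [HK [Hnz Hsec]] HJ Jr nr.
case: (Hsec J HJ) => [He|He]; first by move=> x Kx; apply/He.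
exfalso; apply: nr => k Kk; apply/He; exact: prodIN_gen.
Qed.

Lemma second_aK (R : comNzRingType) (M : lmodType R) (K : M -> Prop) a x :
  second K -> ~ Ann K a -> K x -> exists x', K x' /\ x = a *: x'.
Proof.
move=> HK na Kx.
have := second_cover HK (pI_ideal a) (ex_intro _ 1 (esym (mulr1 a))) na Kx.
have HK' := HK; case: HK' => [[K0 [KD KS]] _].
move=> /(_ (fun y => exists x', K x' /\ y = a *: x')); apply.
- split; first by exists 0; rewrite scaler0.
  split; first by move=> u v [u' [? ->]] [v' [? ->]]; exists (u' + v'); rewrite scalerDr; split=> //; apply: KD.
  by move=> r u [u' [? ->]]; exists (r *: u'); rewrite scalerA mulrC -scalerA; split=> //; apply: KS.
- by move=> b m [s ->] Km; exists (s *: m); rewrite scalerA; split=> //; apply: KS.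
Qed.

Lemma nz_ex (R : comNzRingType) (M : lmodType R) (N : M -> Prop) :
  submodule N -> nonzero_sub N -> exists x, N x /\ x <> 0.
Proof.
move=> [N0 _] Hnz; apply: NNPP => Hn; apply: Hnz => x; split.
- by move=> Nx; apply: NNPP => nx; apply: Hn; exists x.
- by rewrite /zero_sub => ->.
Qed.

Lemma ex_nz (R : comNzRingType) (M : lmodType R) (N : M -> Prop) x :
  N x -> x <> 0 -> nonzero_sub N.
Proof. by move=> Nx nx He; apply: nx; apply/He. Qed.

Lemma second_inj (R : comNzRingType) (M : lmodType R) (K : M -> Prop) a x :
  semisimple_mod M -> second K -> ~ Ann K a -> K x -> a *: x = 0 -> x = 0.
Proof.
move=> Hss HK na Kx ax.
have HKs : submodule K by case: HK.
have HZ := sub_inter HKs (ker_sub M a).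
have [C [HC [HZC HZCs]]] := Hss _ HZ.
have [x' [Kx' Ex]] := second_aK HK na Kx.
have [z' [c' [[Kz' az'] [Cc' Ex']]]] : sum_sub (fun y => K y /\ a *: y = 0) C x' by apply/HZCs.
apply/(HZC _); split; first by split.
rewrite Ex Ex' scalerDr az' add0r; by case: HC => _ [_ HS]; apply: HS.
Qed.
Lemma Ann_prime (R : comNzRingType) (M : lmodType R) (N : M -> Prop) r s :
  second N -> Ann N (r * s) -> ~ Ann N r -> Ann N s.
Proof.
move=> HN Hrs nr k Nk.
have := second_cover HN (pI_ideal r) (ex_intro _ 1 (esym (mulr1 r))) nr Nk.
move=> /(_ _ (ker_sub M s)); apply.
move=> b m [t ->] Nm; rewrite scalerA (_ : s * (r * t) = t * (r * s)); last by ring.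
rewrite -scalerA.
by rewrite (Hrs m Nm) scaler0.
Qed.

Lemma incomp (R : comNzRingType) (M : lmodType R) n (K : 'I_n -> M -> Prop) i j :
  min_second_rep K -> att_eq_Min K -> i != j ->
  exists r, Ann (K j) r /\ ~ Ann (K i) r.
Proof.
move=> [_ [_ [Hd _]]] Hatt ij; apply: NNPP => Hn.
have Hle : ideal_le (Ann (K j)) (Ann (K i)).
  by move=> r Hr; apply: NNPP => nr; apply: Hn; exists r.
apply: (Hd j i); first by rewrite eq_sym.
exact: Hatt.
Qed.

Lemma one_notin (R : comNzRingType) (M : lmodType R) (N : M -> Prop) :
  second N -> ~ Ann N 1.
Proof.
move=> [HN [Hnz _]] H1; have [x [Nx nx]] := nz_ex HN Hnz.
by apply: nx; rewrite -(scale1r x); apply: H1.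
Qed.

Lemma exists_a_seq (R : comNzRingType) (M : lmodType R) n (K : 'I_n -> M -> Prop) i
  (s : seq 'I_n) :
  min_second_rep K -> att_eq_Min K -> i \notin s ->
  exists a, (forall j, j \in s -> Ann (K j) a) /\ ~ Ann (K i) a.
Proof.
move=> Hrep Hatt; elim: s => [|j s IH].
  move=> _; exists 1; split=> //; apply: one_notin.
  by case: Hrep => _ [H _]; apply: H.
rewrite in_cons negb_or => /andP [ij /IH [a [Ha na]]].
have [b [Hb nb]] := incomp Hrep Hatt ij.
exists (b * a); split.
- move=> j'; rewrite in_cons => /orP [/eqP ->|Hj'].
  + by rewrite mulrC; apply: (proj2 (proj2 (Ann_ideal (K j)))).
  + by apply: (proj2 (proj2 (Ann_ideal (K j')))); apply: Ha.
- move=> Hba; apply: na; apply: (Ann_prime _ Hba nb).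
  by case: Hrep => _ [H _]; apply: H.
Qed.

Lemma exists_a (R : comNzRingType) (M : lmodType R) n (K : 'I_n -> M -> Prop) i :
  min_second_rep K -> att_eq_Min K ->
  exists a, (forall j, j != i -> Ann (K j) a) /\ ~ Ann (K i) a.
Proof.
move=> Hrep Hatt.
have Hi : i \notin [seq j <- enum 'I_n | j != i] by rewrite mem_filter eqxx.
have [a [Ha na]] := @exists_a_seq R M n K i [seq j <- enum 'I_n | j != i] Hrep Hatt Hi.
by exists a; split=> // j ji; apply: Ha; rewrite mem_filter ji mem_enum.
Qed.

Lemma a_sum (R : comNzRingType) (M : lmodType R) n (K : 'I_n -> M -> Prop) i a
  (k : 'I_n -> M) :
  (forall j, j != i -> Ann (K j) a) -> (forall j, K j (k j)) ->
  a *: \sum_(j < n) k j = a *: k i.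
Proof.
move=> Ha Hk; rewrite scaler_sumr (bigD1 i) //= big1 ?addr0 //.
by move=> j ji; exact: (Ha j ji (k j) (Hk j)).
Qed.

Lemma a_into (R : comNzRingType) (M : lmodType R) n (K : 'I_n -> M -> Prop) i a x :
  min_second_rep K -> (forall j, j != i -> Ann (K j) a) -> K i (a *: x).
Proof.
move=> [Hfull [Hsec _]] Ha.
have [k [Hk ->]] : big_sum_sub K x by apply/(Hfull x).
rewrite (a_sum Ha Hk); case: (Hsec i) => [[_ [_ HS]] _]; exact: HS.
Qed.

Lemma some_a (R : comNzRingType) (M : lmodType R) n (K : 'I_n -> M -> Prop)
  (a : 'I_n -> R) (x : M) :
  semisimple_mod M -> min_second_rep K ->
  (forall i j, j != i -> Ann (K j) (a i)) -> (forall i, ~ Ann (K i) (a i)) ->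
  x <> 0 -> exists j, a j *: x <> 0.
Proof.
move=> Hss Hrep Ha na nx; apply: NNPP => Hn; apply: nx.
have [Hfull [Hsec _]] := Hrep.
have [k [Hk Ex]] : big_sum_sub K x by apply/(Hfull x).
rewrite Ex in Hn *; apply: big1 => j _.
apply: (second_inj Hss (Hsec j) (na j) (Hk j)).
rewrite -(a_sum (Ha j) Hk); apply: NNPP => H; apply: Hn; by exists j.
Qed.
Lemma kill (R : comNzRingType) (M : lmodType R) n (K : 'I_n -> M -> Prop) i a I (y : M) :
  min_second_rep K -> (forall j, j != i -> Ann (K j) a) ->
  ideal_le I (Ann (K i)) -> prod_IN I (@full_sub R M) y -> a *: y = 0.
Proof.
move=> Hrep Ha HI Hy; apply: (Hy _ (ker_sub M a)).
move=> b m Ib _; rewrite scalerA mulrC -scalerA.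
exact: (HI b Ib _ (a_into m Hrep Ha)).
Qed.

Definition C0 (R : comNzRingType) (M : lmodType R) n (K : 'I_n -> M -> Prop) :=
  forall i, simple_sub (K i).

Lemma contains_K (R : comNzRingType) (M : lmodType R) n (K : 'I_n -> M -> Prop)
  (a : 'I_n -> R) (L : M -> Prop) x j :
  semisimple_mod M -> min_second_rep K ->
  (forall i j, j != i -> Ann (K j) (a i)) -> (forall i, ~ Ann (K i) (a i)) ->
  C0 K -> submodule L -> L x -> a j *: x <> 0 -> sub_le (K j) L.
Proof.
move=> Hss Hrep Ha na HC HL Lx nx.
have [_ [Hsec _]] := Hrep.
have HKj : submodule (K j) by case: (Hsec j).
case: (HC j) => _ [_ Hs].
case: (Hs _ (sub_inter HL HKj) (fun _ h => proj2 h)) => [Hz|Heq].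
  exfalso; apply: nx; apply/(Hz _); split.
  - by case: HL => _ [_ HS]; apply: HS.
  - exact: (a_into x Hrep (Ha j)).
by move=> y Ky; exact: (proj1 ((Heq y).2 Ky)).
Qed.

Lemma T1 (R : comNzRingType) (M : lmodType R) n (K : 'I_n -> M -> Prop) (a : 'I_n -> R) :
  semisimple_mod M -> min_second_rep K ->
  (forall i j, j != i -> Ann (K j) (a i)) -> (forall i, ~ Ann (K i) (a i)) ->
  multiplication_mod M -> C0 K.
Proof.
move=> Hss Hrep Ha na Hm i.
have [_ [Hsec _]] := Hrep.
have [HKs [Hnz _]] := Hsec i.
split=> //; split=> // L HL HLK.
case: (classic (sub_eq L (@zero_sub R M))) => [|HLnz]; [by left|right].
have [x [Lx nx]] := nz_ex HL HLnz.
move=> y; split; [exact: HLK|move=> Ky].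
have [I [HI HLI]] := Hm L HL.
have [r [Ir nr]] : exists r, I r /\ ~ Ann (K i) r.
  apply: NNPP => Hn; apply: nx.
  apply: (second_inj Hss (Hsec i) (na i) (HLK x Lx)).
  apply: (kill Hrep (Ha i) _ ((HLI x).1 Lx)).
  by move=> b Ib; apply: NNPP => nb; apply: Hn; exists b.
apply/(HLI y); apply: (prodIN_mono (I:=I) (N:=K i)) => //.
exact: (second_cover (Hsec i) HI Ir nr Ky).
Qed.

Lemma T2 (R : comNzRingType) (M : lmodType R) n (K : 'I_n -> M -> Prop) (a : 'I_n -> R) :
  semisimple_mod M -> min_second_rep K ->
  (forall i j, j != i -> Ann (K j) (a i)) -> (forall i, ~ Ann (K i) (a i)) ->
  C0 K -> multiplication_mod M.
Proof.
move=> Hss Hrep Ha na HC N HN.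
have [Hfull [Hsec _]] := Hrep.
have [N0 [ND NS]] := HN.
exists (fun r => forall m, N (r *: m)); split.
  split; first by move=> m; rewrite scale0r.
  split; first by move=> u v Hu Hv m; rewrite scalerDl; apply: ND.
  by move=> r u Hu m; rewrite -scalerA; apply: NS.
move=> x; split; last first.
  by move=> Hx; apply: Hx => // b m Hb _; exact: Hb.
move=> Nx.
have [k [Hk Ex]] : big_sum_sub K x by apply/(Hfull x).
rewrite Ex; apply: sub_sum; first exact: prodIN_sub.
move=> j _.
case: (classic (k j = 0)) => [->|nk]; first by case: (prodIN_sub (fun r => forall m, N (r *: m)) (@full_sub R M)).
have nx : a j *: x <> 0.
  rewrite Ex (a_sum (Ha j) Hk) => h; apply: nk.
  exact: (second_inj Hss (Hsec j) (na j) (Hk j) h).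
have KN := contains_K Hss Hrep Ha na HC HN Nx nx.
apply: (prodIN_mono (I:=fun r => forall m, N (r *: m)) (N:=K j)) => //.
apply: (second_cover (Hsec j) _ (r:=a j)) => //.
- split; first by move=> m; rewrite scale0r.
  split; first by move=> u v Hu Hv m; rewrite scalerDl; apply: ND.
  by move=> r u Hu m; rewrite -scalerA; apply: NS.
- by move=> m; apply: KN; exact: (a_into m Hrep (Ha j)).
Qed.

Lemma T3 (R : comNzRingType) (M : lmodType R) n (K : 'I_n -> M -> Prop) (a : 'I_n -> R) :
  semisimple_mod M -> min_second_rep K ->
  (forall i j, j != i -> Ann (K j) (a i)) -> (forall i, ~ Ann (K i) (a i)) ->
  (forall N : M -> Prop, PS_hollow N -> simple_sub N) -> C0 K.
Proof.
move=> Hss Hrep Ha na H2 i; apply: H2.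
have [_ [Hsec _]] := Hrep.
have [HKs [Hnz _]] := Hsec i.
split=> //; split=> // I L HI HL Hcov.
case: (classic (exists r, I r /\ ~ Ann (K i) r)) => [[r [Ir nr]]|Hn]; [left|right].
  move=> y Ky; apply: (prodIN_mono (I:=I) (N:=K i)) => //.
  exact: (second_cover (Hsec i) HI Ir nr Ky).
move=> x Kx.
have [x' [Kx' Ex]] := second_aK (Hsec i) (na i) Kx.
have [y [l [Hy [Ll Ex']]]] := Hcov x' Kx'.
have Hle : ideal_le I (Ann (K i)).
  by move=> b Ib; apply: NNPP => nb; apply: Hn; exists b.
rewrite Ex Ex' scalerDr (kill Hrep (Ha i) Hle Hy) add0r.
by case: HL => _ [_ HS]; apply: HS.
Qed.

Lemma T4 (R : comNzRingType) (M : lmodType R) n (K : 'I_n -> M -> Prop) (a : 'I_n -> R) :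
  semisimple_mod M -> min_second_rep K -> att_eq_Min K ->
  (forall i j, j != i -> Ann (K j) (a i)) -> (forall i, ~ Ann (K i) (a i)) ->
  C0 K -> (forall N : M -> Prop, PS_hollow N -> simple_sub N).
Proof.
move=> Hss Hrep Hatt Ha na HC N [HN [Hnz Hps]].
have [Hfull [Hsec _]] := Hrep.
split=> //; split=> // L HL HLN.
case: (classic (sub_eq L (@zero_sub R M))) => [|HLnz]; [by left|right].
have [x [Lx nx]] := nz_ex HL HLnz.
have [j nj] := some_a Hss Hrep Ha na nx.
have KL := contains_K Hss Hrep Ha na HC HL Lx nj.
have HKj : submodule (K j) by case: (Hsec j).
move=> y; split; [exact: HLN|move=> Ny].
have Hcov : sub_le N (sum_sub (prod_IN (Ann (K j)) (@full_sub R M)) (K j)).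
  move=> z _.
  have [k [Hk Ez]] : big_sum_sub K z by apply/(Hfull z).
  exists (\sum_(i < n | i != j) k i), (k j); split; last split.
  - apply: sub_sum; first exact: prodIN_sub.
    move=> i ij.
    have [r [Hr nr]] := incomp Hrep Hatt ij.
    apply: (prodIN_mono (I:=Ann (K j)) (N:=K i)) => //.
    exact: (second_cover (Hsec i) (Ann_ideal (K j)) Hr nr (Hk i)).
  - exact: Hk.
  - by rewrite Ez (bigD1 j) //= addrC.
case: (Hps _ _ (Ann_ideal (K j)) HKj Hcov) => [HNp|HNK]; last first.
  by apply: KL; apply: HNK.
exfalso.
have [k [Kk nk]] : exists k, K j k /\ a j *: k <> 0.
  apply: NNPP => Hn; apply: (na j) => k Kk; apply: NNPP => h; apply: Hn; by exists k.
apply: nk; apply: (kill Hrep (Ha j) (fun r h => h) (HNp k _)).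
by apply: HLN; apply: KL.
Qed.

Lemma T6 (R : comNzRingType) (M : lmodType R) n (K : 'I_n -> M -> Prop) (a : 'I_n -> R) :
  semisimple_mod M -> min_second_rep K ->
  (forall i j, j != i -> Ann (K j) (a i)) -> (forall i, ~ Ann (K i) (a i)) ->
  C0 K -> (forall N : M -> Prop, second N -> simple_sub N).
Proof.
move=> Hss Hrep Ha na HC N [HN [Hnz Hs2]].
have [Hfull [Hsec _]] := Hrep.
split=> //; split=> // L HL HLN.
case: (classic (sub_eq L (@zero_sub R M))) => [|HLnz]; [by left|right].
have [x [Lx nx]] := nz_ex HL HLnz.
have [j nj] := some_a Hss Hrep Ha na nx.
have KL := contains_K Hss Hrep Ha na HC HL Lx nj.
have HKj : submodule (K j) by case: (Hsec j).
move=> y; split; [exact: HLN|move=> Ny].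
apply: (KL).
case: (Hs2 _ (pI_ideal (a j))) => [He|Hz].
  apply: ((He y).2 Ny _ HKj).
  move=> b m [s ->] _; rewrite -scalerA; exact: (a_into _ Hrep (Ha j)).
exfalso.
have [k [Kk nk]] : exists k, K j k /\ a j *: k <> 0.
  apply: NNPP => Hn; apply: (na j) => k Kk; apply: NNPP => h; apply: Hn; by exists k.
apply: nk; apply/(Hz _); apply: prodIN_gen; last by apply: HLN; apply: KL.
by exists 1; rewrite mulr1.
Qed.

Lemma T7 (R : comNzRingType) (M : lmodType R) n (K : 'I_n -> M -> Prop) (a : 'I_n -> R) :
  semisimple_mod M -> min_second_rep K ->
  comultiplication_mod M -> C0 K.
Proof.
move=> Hss Hrep Hc i.
have [_ [Hsec _]] := Hrep.
have [HKs [Hnz _]] := Hsec i.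
split=> //; split=> // L HL HLK.
case: (classic (sub_eq L (@zero_sub R M))) => [|HLnz]; [by left|right].
have [x [Lx nx]] := nz_ex HL HLnz.
move=> y; split; [exact: HLK|move=> Ky].
apply/(Hc L HL y) => r Hr.
have : Ann (K i) r.
  apply: NNPP => nr; apply: nx.
  exact: (second_inj Hss (Hsec i) nr (HLK x Lx) (Hr x Lx)).
by move=> h; exact: h y Ky.
Qed.

Lemma T8 (R : comNzRingType) (M : lmodType R) n (K : 'I_n -> M -> Prop) (a : 'I_n -> R) :
  semisimple_mod M -> min_second_rep K ->
  (forall i j, j != i -> Ann (K j) (a i)) -> (forall i, ~ Ann (K i) (a i)) ->
  C0 K -> comultiplication_mod M.
Proof.
move=> Hss Hrep Ha na HC Kc HK y; split.
  by move=> Ky r Hr; exact: Hr y Ky.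
move=> Hy.
have [Hfull [Hsec _]] := Hrep.
have [k [Hk Ey]] : big_sum_sub K y by apply/(Hfull y).
rewrite Ey; apply: sub_sum => // i _.
have HKi : submodule (K i) by case: (Hsec i).
case: (classic (sub_eq (fun x => Kc x /\ K i x) (@zero_sub R M))) => [Hz|Hnz].
  have Aa : Ann Kc (a i).
    move=> z Kz; apply/(Hz _); split.
    - by case: HK => _ [_ HS]; apply: HS.
    - exact: (a_into z Hrep (Ha i)).
  have := Hy _ Aa; rewrite Ey (a_sum (Ha i) Hk) => h.
  by rewrite (second_inj Hss (Hsec i) (na i) (Hk i) h); case: HK.
case: (HC i) => _ [_ Hs].
case: (Hs _ (sub_inter HK HKi) (fun _ h => proj2 h)) => [Hz|Heq].
  by exfalso; apply: Hnz.
exact: (proj1 ((Heq (k i)).2 (Hk i))).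
Qed.

Theorem corollary5p19 (R : comNzRingType) (M : lmodType R) (n : nat)
    (K : 'I_n -> M -> Prop) :
  semisimple_mod M ->
  min_second_rep K ->
  att_eq_Min K ->
  (multiplication_mod M <->
     (forall N : M -> Prop, PS_hollow N -> simple_sub N)) /\
  ((forall N : M -> Prop, PS_hollow N -> simple_sub N) <->
     (forall N : M -> Prop, second N -> simple_sub N)) /\
  ((forall N : M -> Prop, second N -> simple_sub N) <->
     comultiplication_mod M).
Proof.
move=> Hss Hrep Hatt.
pose a := fun i => proj1_sig (constructive_indefinite_description _ (exists_a i Hrep Hatt)).
have Ha : forall i j, j != i -> Ann (K j) (a i).
  move=> i; exact: (proj1 (proj2_sig (constructive_indefinite_description _ (exists_a i Hrep Hatt)))).
have na : forall i, ~ Ann (K i) (a i).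
  move=> i; exact: (proj2 (proj2_sig (constructive_indefinite_description _ (exists_a i Hrep Hatt)))).
have E1 := T1 Hss Hrep Ha na.
have E1' := T2 Hss Hrep Ha na.
have E2 := T3 Hss Hrep Ha na.
have E2' := T4 Hss Hrep Hatt Ha na.
have E3 : (forall N : M -> Prop, second N -> simple_sub N) -> C0 K.
  by move=> H i; apply: H; case: (Hrep) => _ [H' _]; apply: H'.
have E3' := T6 Hss Hrep Ha na.
have E4 := T7 a Hss Hrep.
have E4' := T8 Hss Hrep Ha na.
split; last split; split; move=> H.
- exact: E2' (E1 H).
- exact: E1' (E2 H).
- exact: E3' (E2 H).
- exact: E2' (E3 H).
- exact: E4' (E3 H).
- exact: E3' (E4 H).
Qed.
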